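(* A regular monoid with finitely many left ideals and finitely many right ideals is residually finite if and only if all its maximal subgroups are residually finite.
   Context: A monoid $M$ is regular if for each $x$ there is $y$ with $xyx=x$. A maximal subgroup is a maximal subgroup of $M$ (an $\mathcal{H}$-class containing an idempotent, where $\mathcal{H}=\mathcal{R}\cap\mathcal{L}$). Residual finiteness: distinct elements are separated by homomorphisms to finite monoids (groups). *)

(* Defs.v *)
From Stdlib Require List.
From mathcomp Require Import all_boot all_fingroup.
Set Implicit Arguments. Unset Strict Implicit. Unset Printing Implicit Defensive.

Definition is_monoid (M : Type) (mul : M -> M -> M) (one : M) : Prop :=
  (forall x y z, mul x (mul y z) = mul (mul x y) z) /\
  (forall x, mul one x = x) /\ (forall x, mul x one = x).

Definition regular (M : Type) (mul : M -> M -> M) : Prop :=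
  forall x, exists y, mul (mul x y) x = x.

Definition left_ideal (M : Type) (mul : M -> M -> M) (I : M -> Prop) : Prop :=
  forall m x, I x -> I (mul m x).
Definition right_ideal (M : Type) (mul : M -> M -> M) (I : M -> Prop) : Prop :=
  forall m x, I x -> I (mul x m).

Definition finitely_many (M : Type) (P : (M -> Prop) -> Prop) : Prop :=
  exists s : seq (M -> Prop),
    forall I, P I -> exists2 J, List.In J s & forall x, I x <-> J x.

Definition monoid_hom (M N : Type) (mulM : M -> M -> M) (oneM : M)
  (mulN : N -> N -> N) (oneN : N) (f : M -> N) : Prop :=
  (forall x y, f (mulM x y) = mulN (f x) (f y)) /\ f oneM = oneN.

Definition residually_finite_monoid (M : Type) (mul : M -> M -> M) (one : M) : Prop :=
  forall x y, x <> y ->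
    exists (N : finType) (mulN : N -> N -> N) (oneN : N) (f : M -> N),
      is_monoid mulN oneN /\ monoid_hom mul one mulN oneN f /\ f x <> f y.

Definition greenR (M : Type) (mul : M -> M -> M) (x y : M) : Prop :=
  exists a b, x = mul y a /\ y = mul x b.
Definition greenL (M : Type) (mul : M -> M -> M) (x y : M) : Prop :=
  exists a b, x = mul a y /\ y = mul b x.
Definition greenH (M : Type) (mul : M -> M -> M) (x y : M) : Prop :=
  greenR mul x y /\ greenL mul x y.

Definition is_idempotent (M : Type) (mul : M -> M -> M) (e : M) : Prop := mul e e = e.

(* The maximal subgroup at an idempotent e is its H-class H_e (a group with
   identity e under the restricted multiplication). *)
Definition residually_finite_maximal_subgroup (M : Type) (mul : M -> M -> M)
  (e : M) : Prop :=
  forall x y, greenH mul x e -> greenH mul y e -> x <> y ->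
    exists (G : finGroupType) (f : M -> G),
      (forall u v, greenH mul u e -> greenH mul v e ->
         f (mul u v) = (f u * f v)%g) /\ f x <> f y.

(* Main.v *)
Require Import Defs.
From Stdlib Require Import ClassicalEpsilon Classical.
From Stdlib Require List.
From mathcomp Require Import all_boot all_fingroup.
Set Implicit Arguments. Unset Strict Implicit. Unset Printing Implicit Defensive.

Definition pb (P : Prop) : bool := if excluded_middle_informative P then true else false.
Lemma pbP (P : Prop) : reflect P (pb P).
Proof. rewrite /pb; case: excluded_middle_informative => H; by constructor. Qed.

Definition Sep (M : Type) (mul : M -> M -> M) (one : M) (x y : M) : Prop :=
  exists (N : finType) (mulN : N -> N -> N) (oneN : N) (f : M -> N),
      is_monoid mulN oneN /\ monoid_hom mul one mulN oneN f /\ f x <> f y.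

Section RA.
Variables (M : Type) (mul : M -> M -> M) (one : M) (X : finType) (act : X -> M -> X).
Hypothesis act1 : forall p, act p one = p.
Hypothesis actM : forall p s t, act (act p s) t = act p (mul s t).
Definition fmul (a b : {ffun X -> X}) : {ffun X -> X} := [ffun p => b (a p)].
Definition fone : {ffun X -> X} := [ffun p => p].
Lemma RA_sep x y p : act p x <> act p y -> Sep mul one x y.
Proof.
move=> Hp; exists {ffun X -> X}, fmul, fone, (fun s => [ffun p => act p s]).
split; [split; [|split]|split; [split|]].
- by move=> a b c; apply/ffunP => q; rewrite !ffunE.
- by move=> a; apply/ffunP => q; rewrite !ffunE.
- by move=> a; apply/ffunP => q; rewrite !ffunE.
- by move=> a b; apply/ffunP => q; rewrite !ffunE actM.
- by apply/ffunP => q; rewrite !ffunE act1.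
- by move/(congr1 (fun F : {ffun X -> X} => F p)); rewrite !ffunE.
Qed.
End RA.

Lemma sep_flip M (mul : M -> M -> M) one x y :
  Sep (fun a b => mul b a) one x y -> Sep mul one x y.
Proof.
case=> N [mN [oN [f [[A [L R]] [[fm f1] ne]]]]].
exists N, (fun a b => mN b a), oN, f; split; [split; [|split]|split; [split|]].
- by move=> a b c /=; rewrite A.
- by [].
- by [].
- by move=> a b; rewrite fm.
- by [].
- by [].
Qed.

Section Forward.
Variables (M : Type) (mul : M -> M -> M) (one : M).
Local Notation "a ** b" := (mul a b) (at level 40, left associativity).
Hypothesis Hmon : is_monoid mul one.
Variable e : M.
Hypothesis He : e ** e = e.
Variables (N : finType) (mN : N -> N -> N) (oN : N) (f : M -> N).
Hypothesis AN : forall x y z, mN x (mN y z) = mN (mN x y) z.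
Hypothesis fm : forall x y, f (x ** y) = mN (f x) (f y).

Definition gw (w : M) (n : N) : N := if mN n (f e) == n then mN n (f w) else n.
Definition sig (w : M) : {perm N} :=
  match excluded_middle_informative (injective (gw w)) with
  | left H => perm H | right _ => 1%g end.
Lemma sigE w : injective (gw w) -> forall n, sig w n = gw w n.
Proof. by rewrite /sig; case: excluded_middle_informative => // H _ n; rewrite permE. Qed.

Definition Pw w := w ** e = w /\ exists d, w ** d = e.

Lemma Pw_H u : greenH mul u e -> Pw u.
Proof.
case: Hmon => A [L1 R1].
case=> [[a [b [_ Eb]]] [c [d [Ec _]]]]; split; last by exists b.
by rewrite Ec -A He.
Qed.

Lemma Pw_mul u v : Pw u -> Pw v -> Pw (u ** v).
Proof.
case: Hmon => A [L1 R1].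
move=> [Ue [d Ud]] [Ve [d' Vd]]; split; first by rewrite -A Ve.
exists (d' ** d); by rewrite !A -(A u v d') Vd Ue Ud.
Qed.

Lemma gw_inj w : Pw w -> injective (gw w).
Proof.
move=> [We [d Wd]] n m; rewrite /gw.
have S1 : forall k, mN (mN k (f w)) (f e) = mN k (f w) by move=> k; rewrite -AN -fm We.
case: eqP => Hn; case: eqP => Hm //.
- move=> E; have := congr1 (fun z => mN z (f d)) E => /=.
  by rewrite -!AN -fm Wd Hn Hm.
- by move=> E; case: Hm; rewrite -E S1.
- by move=> E; case: Hn; rewrite E S1.
Qed.
End Forward.

Lemma forward M (mul : M -> M -> M) one : is_monoid mul one ->
  residually_finite_monoid mul one ->
  forall e, is_idempotent mul e -> residually_finite_maximal_subgroup mul e.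
Proof.
move=> Hmon RF e He x y Hx Hy nxy.
have [A [L1 R1]] := Hmon.
case: (RF x y nxy) => N [mN [oN [f [[AN _] [[fm f1] fne]]]]].
eexists; exists (sig e mN f); split.
- move=> u v Hu Hv.
  have Pu := Pw_H Hmon He Hu; have Pv := Pw_H Hmon He Hv.
  have Puv := Pw_mul Hmon Pu Pv.
  apply/permP => n; rewrite permM !sigE; try exact: gw_inj.
  rewrite /gw; case: eqP => Hn; last by move/eqP/negbTE: Hn => ->.
  have -> : mN (mN n (f u)) (f e) = mN n (f u) by rewrite -AN -fm (proj1 Pu).
  by rewrite eqxx fm AN.
- move=> E; apply: fne.
  have := congr1 (fun s : {perm N} => s (f e)) E => /=.
  rewrite !sigE; try exact: (gw_inj AN fm (Pw_H Hmon He _)).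
  rewrite /gw -fm He eqxx -!fm.
  case: Hx => [[a [b [Ea _]]] _]; case: Hy => [[a' [b' [Ea' _]]] _].
  by rewrite Ea Ea' !A He; apply: id.
Qed.

Lemma ex_minn_ext (P Q : pred nat) (hP : exists n, P n) (hQ : exists n, Q n) :
  P =1 Q -> ex_minn hP = ex_minn hQ.
Proof.
move=> PQ; case: ex_minnP => m Pm mmin; case: ex_minnP => m' Qm' mmin'.
apply/eqP; rewrite eqn_leq mmin ?PQ // mmin' // -PQ //.
Qed.

Section Idx.
Variables (M : Type) (mul : M -> M -> M) (one : M).
Local Notation "a ** b" := (mul a b) (at level 40, left associativity).
Hypothesis Hmon : is_monoid mul one.
Variable s : seq (M -> Prop).
Hypothesis Hs : forall I, left_ideal mul I -> exists2 J, List.In J s & forall x, I x <-> J x.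

Definition Mz z : M -> Prop := fun w => exists m, w = m ** z.
Lemma Mz_ideal z : left_ideal mul (Mz z).
Proof.
case: Hmon => A _; move=> m w [m' ->]; exists (m ** m'); by rewrite A.
Qed.

Definition Pk z k := pb (k < length s /\ forall w, List.nth k s (fun _ => False) w <-> Mz z w).
Lemma Pk_ex z : exists k, Pk z k.
Proof.
case: (Hs (@Mz_ideal z)) => J HJ EJ.
case: (List.In_nth _ _ (fun _ => False) HJ) => k [/ltP lt Ek].
exists k; apply/pbP; split => // w; rewrite Ek; split => /EJ //.
Qed.

Definition lidx z := ex_minn (Pk_ex z).
Definition nL := (length s).+1.
Definition Lix z : 'I_nL := inord (lidx z).

Lemma lidx_spec z : lidx z < length s /\
   forall w, List.nth (lidx z) s (fun _ => False) w <-> Mz z w.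
Proof. rewrite /lidx; case: ex_minnP => m /pbP H _; exact: H. Qed.

Lemma Lix_val z : val (Lix z) = lidx z.
Proof. rewrite /Lix; apply: inordK; case: (lidx_spec z) => H _; exact: ltnW. Qed.

Lemma greenL_Mz a b : greenL mul a b -> forall w, Mz a w <-> Mz b w.
Proof.
case: Hmon => A _.
case=> c [d [Ea Eb]] w; split; case=> m ->.
- exists (m ** c); by rewrite Ea A.
- exists (m ** d); by rewrite Eb A.
Qed.

Lemma LixP a b : Lix a = Lix b <-> greenL mul a b.
Proof.
case: Hmon => A [L1 R1].
split.
- move/(congr1 val); rewrite !Lix_val => E.
  case: (lidx_spec a) => _ Ha; case: (lidx_spec b) => _ Hb.
  have Hab : forall w, Mz a w <-> Mz b w.
    by move=> w; rewrite -Ha -Hb E.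
  case: (proj1 (Hab a)); first by exists one; rewrite L1.
  case: (proj2 (Hab b)); first by exists one; rewrite L1.
  move=> d Ed c Ec; by exists c, d.
- move=> H; apply: val_inj; rewrite /= !Lix_val /lidx; apply: ex_minn_ext => k.
  rewrite /Pk; apply/idP/idP => /pbP [lt Hk]; apply/pbP; split => // w;
  rewrite Hk; have := greenL_Mz H w; tauto.
Qed.

Lemma greenL_refl a : greenL mul a a.
Proof. case: Hmon => _ [L1 _]; exists one, one; by rewrite L1. Qed.
Lemma greenL_sym a b : greenL mul a b -> greenL mul b a.
Proof. by case=> c [d [E1 E2]]; exists d, c. Qed.
Lemma greenL_rc a b t : greenL mul a b -> greenL mul (a ** t) (b ** t).
Proof.
case: Hmon => A _; case=> c [d [E1 E2]]; exists c, d; split; rewrite A; [by rewrite -E1 | by rewrite -E2].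
Qed.

Definition reach (k : 'I_nL) := exists z, Lix z = k.
Definition rep (k : 'I_nL) : M :=
  match excluded_middle_informative (reach k) with
  | left H => proj1_sig (constructive_indefinite_description _ H)
  | right _ => one end.
Lemma repP k : reach k -> Lix (rep k) = k.
Proof.
rewrite /rep; case: excluded_middle_informative => // H _.
exact: proj2_sig (constructive_indefinite_description _ H).
Qed.
Definition actL (k : 'I_nL) (t : M) : 'I_nL :=
  if pb (reach k) then Lix (rep k ** t) else k.

Lemma sepL x y : ~ greenL mul x y -> Sep mul one x y.
Proof.
have [A [L1 R1]] := Hmon.
move=> nL; apply: (@RA_sep _ _ _ _ actL _ _ x y (Lix one)).
- move=> k; rewrite /actL; case: pbP => // H; by rewrite R1 repP.
- move=> k a b; rewrite /actL; case: (pbP (reach k)) => H; last by rewrite (negbTE (introN (pbP _) H)).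
  have Hr : reach (Lix (rep k ** a)) by exists (rep k ** a).
  rewrite (introT (pbP _) Hr).
  apply/LixP; rewrite A; apply: greenL_rc; apply/LixP; exact: repP.
- have Ro : reach (Lix one) by exists one.
  rewrite /actL (introT (pbP _) Ro).
  have H1 : greenL mul (rep (Lix one)) one by apply/LixP; apply: repP.
  move=> E; apply: nL.
  have Hx := greenL_rc x H1; have Hy := greenL_rc y H1.
  rewrite !L1 in Hx Hy; move/LixP: Hx => Hx; move/LixP: Hy => Hy.
  by apply/LixP; rewrite -Hx -Hy.
Qed.

Section Sch.
Variable e : M.
Hypothesis He : e ** e = e.
Definition Re r := greenR mul r e.

Lemma Re_e r : Re r -> e ** r = r.
Proof. case: Hmon => A _; case=> a [b [-> _]]; by rewrite A He. Qed.
Lemma He_r h : greenH mul h e -> h ** e = h.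
Proof. case: Hmon => A _; case=> _ [a [b [-> _]]]; by rewrite -A He. Qed.
Lemma He_l h : greenH mul h e -> e ** h = h.
Proof. case: Hmon => A _; case=> [[a [b [-> _]]] _]; by rewrite A He. Qed.
Lemma Re_ee : Re e.
Proof. by exists e, e; rewrite He. Qed.
Lemma greenH_ee : greenH mul e e.
Proof. by split; exists e, e; rewrite He. Qed.

Lemma Re_Hl h r : greenH mul h e -> e ** r = r -> (Re r <-> Re (h ** r)).
Proof.
have [A [L1 R1]] := Hmon.
move=> Hh Hr; have Hh' := Hh; case: Hh' => [[a [d [Ea Ed]]] [a' [b [Ea' Eb]]]].
split.
- case=> a0 [c [_ Ec]]; exists (h ** r); exists (c ** d); split.
  + by rewrite A He_l.
  + by rewrite !A -(A h r c) -Ec He_r // -Ed.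
- case=> a0 [c [_ Ec]].
  have E1 : r ** c = b ** e by rewrite Ec !A -Eb Hr.
  exists r, (c ** h); split; first by rewrite Hr.
  by rewrite A E1 -A He_l.
Qed.

Lemma L_Hl h r : greenH mul h e -> e ** r = r -> greenL mul (h ** r) r.
Proof.
have [A [L1 R1]] := Hmon.
move=> [_ [a' [b [Ea' Eb]]]] Hr; exists h, b; split => //.
by rewrite A -Eb Hr.
Qed.

Lemma Hdecomp r r' b : Re r -> greenL mul r r' -> e ** r' = r' -> e = r' ** b ->
  greenH mul (r ** b) e /\ (r ** b) ** r' = r.
Proof.
have [A [L1 R1]] := Hmon.
move=> Hr [c [d [Hc Hd]]] Er' Eb.
have Hr' := Hr; case: Hr' => [a0 [be [_ Ebe]]].
split; last by rewrite {1}Hc -!A (A r' b r') -Eb Er' -Hc.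
split.
- exists (r ** b), (r' ** be); split.
  + by rewrite A Re_e.
  + have E2 : (r ** b) ** r' = r by rewrite {1}Hc -!A (A r' b r') -Eb Er' -Hc.
    by rewrite A E2.
- exists c, d; split.
  + by rewrite Hc -A -Eb.
  + by rewrite A -Hd.
Qed.

Lemma Re_pref r t : e ** r = r -> Re (r ** t) -> Re r.
Proof.
have [A _] := Hmon.
move=> Er [a [c [_ Ec]]]; exists r, (t ** c); split => //.
by rewrite A.
Qed.

Definition reachS (k : 'I_nL) := exists p : M * M, [/\ Re p.1, Lix p.1 = k & e = p.1 ** p.2].
Definition rq (k : 'I_nL) : M * M :=
  match excluded_middle_informative (reachS k) with
  | left H => proj1_sig (constructive_indefinite_description _ H)
  | right _ => (e, e) end.
Lemma rq_spec k : reachS k -> [/\ Re (rq k).1, Lix (rq k).1 = k & e = (rq k).1 ** (rq k).2].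
Proof.
rewrite /rq; case: excluded_middle_informative => // H _.
exact: proj2_sig (constructive_indefinite_description _ H).
Qed.
Lemma reachS_of r : Re r -> reachS (Lix r).
Proof. move=> Hr; have Hr' := Hr; case: Hr' => [a [b [_ Eb]]]; by exists (r, b). Qed.

Definition hc (r : M) : M := r ** (rq (Lix r)).2.

Lemma hc_spec r : Re r -> greenH mul (hc r) e /\ hc r ** (rq (Lix r)).1 = r.
Proof.
move=> Hr; case: (rq_spec (reachS_of Hr)) => R1 L1 E1.
apply: Hdecomp => //; last exact: Re_e.
apply/LixP; by rewrite L1.
Qed.

Section Act.
Variables (G : finGroupType) (phi : M -> G).
Hypothesis phiM : forall u v, greenH mul u e -> greenH mul v e ->
  phi (u ** v) = (phi u * phi v)%g.

Lemma phi_e : phi e = 1%g.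
Proof.
have := phiM greenH_ee greenH_ee; rewrite He => E.
by apply: (mulgI (phi e)); rewrite -E mulg1.
Qed.

Definition actS (p : option (G * 'I_nL)) (t : M) : option (G * 'I_nL) :=
  match p with
  | None => None
  | Some (g, i) =>
    if pb (reachS i) then
      if pb (Re ((rq i).1 ** t)) then Some ((g * phi (hc ((rq i).1 ** t)))%g, Lix ((rq i).1 ** t))
      else None
    else Some (g, i)
  end.

Lemma actS1 p : actS p one = p.
Proof.
have [A [L1 R1]] := Hmon.
case: p => [[g i]|] //=; case: pbP => // Hi.
case: (rq_spec Hi) => Hr Li Ei.
rewrite R1 (introT (pbP _) Hr) /hc Li -Ei phi_e mulg1 //.
Qed.

Lemma actSM p a t : actS (actS p a) t = actS p (a ** t).
Proof.
have [A [L1 R1]] := Hmon.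
case: p => [[g i]|] //=; case: (pbP (reachS i)) => Hi; last first.
  by rewrite /= (negbTE (introN (pbP _) Hi)).
case: (rq_spec Hi) => Hr Li Ei.
have Er0 := Re_e Hr.
case: (pbP (Re ((rq i).1 ** a))) => Hra; last first.
  case: pbP => // Hrat; case: Hra; apply: (Re_pref _ (t := t)); last by rewrite -A.
  by rewrite A Er0.
set r := (rq i).1 ** a.
set k := Lix r.
have Hk : reachS k := reachS_of Hra.
case: (rq_spec Hk) => Hrk Lk Ek.
case: (hc_spec Hra) => Hh Eh.
rewrite /= (introT (pbP _) Hk).
set r2 := (rq k).1 ** t.
have Er2 : e ** r2 = r2 by rewrite /r2 A Re_e.
have E : (rq i).1 ** (a ** t) = hc r ** r2 by rewrite A -{1}Eh /r2 A.
rewrite E.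
have HRe := Re_Hl Hh Er2.
have HL : Lix (hc r ** r2) = Lix r2 by apply/LixP; exact: L_Hl.
case: (pbP (Re r2)) => H2.
- rewrite (introT (pbP _) (proj1 HRe H2)) HL.
  have -> : hc (hc r ** r2) = hc r ** hc r2 by rewrite /hc HL A.
  rewrite phiM ?mulgA //; exact: (proj1 (hc_spec H2)).
- case: pbP => // H3; case: H2; exact: (proj2 HRe H3).
Qed.

End Act.

Definition r0 := (rq (Lix e)).1.

Lemma r0_spec : greenH mul r0 e.
Proof.
case: (rq_spec (reachS_of Re_ee)) => Hr Lr _.
split => //; apply/LixP; exact: Lr.
Qed.

Lemma Re_r0 z : Re z -> Re (r0 ** z).
Proof. move=> Hz; apply/(Re_Hl r0_spec (Re_e Hz)); exact: Hz. Qed.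

Lemma hc_ne x y : Re x -> Re y -> x <> y -> Lix (r0 ** x) = Lix (r0 ** y) ->
  hc (r0 ** x) <> hc (r0 ** y).
Proof.
have [A [L1 R1]] := Hmon.
move=> Hx Hy nxy E Eh; apply: nxy.
case: (hc_spec (Re_r0 Hx)) => _ Ex; case: (hc_spec (Re_r0 Hy)) => _ Ey.
have E2 : r0 ** x = r0 ** y by rewrite -Ex -Ey Eh E.
case: r0_spec => _ [c [d [_ Ed]]].
by rewrite -(Re_e Hx) -(Re_e Hy) Ed -!A E2.
Qed.

Lemma sepS (G : finGroupType) (phi : M -> G) x y :
  (forall u v, greenH mul u e -> greenH mul v e -> phi (u ** v) = (phi u * phi v)%g) ->
  Re x -> Re y ->
  (Lix (r0 ** x) <> Lix (r0 ** y) \/ phi (hc (r0 ** x)) <> phi (hc (r0 ** y))) ->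
  Sep mul one x y.
Proof.
move=> phiM Hx Hy Hne.
apply: (@RA_sep _ _ _ _ (actS phi) (@actS1 _ _ phiM) (@actSM _ _ phiM) x y (Some (1%g, Lix e))).
have He0 : reachS (Lix e) := reachS_of Re_ee.
rewrite /= (introT (pbP _) He0) -/r0 (introT (pbP _) (Re_r0 Hx)) (introT (pbP _) (Re_r0 Hy)).
by case=> E1 E2; case: Hne; rewrite ?E1 ?E2 ?mulg1 //; move=> H; apply: H; rewrite -(mul1g (phi _)) E1 mul1g.
Qed.
End Sch.

End Idx.

Theorem mainTheorem19 (M : Type) (mul : M -> M -> M) (one : M) :
  is_monoid mul one ->
  regular mul ->
  finitely_many (left_ideal mul) ->
  finitely_many (right_ideal mul) ->
  (residually_finite_monoid mul one <->
   forall e : M, is_idempotent mul e -> residually_finite_maximal_subgroup mul e).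
Proof.
move=> Hmon Hreg [sL HsL] [sR HsR]; split; first exact: forward.
move=> RFH x y nxy.
have [A [L1 R1]] := Hmon.
case: (classic (greenR mul x y)) => HR; last first.
  apply: sep_flip.
  have Hmon' : is_monoid (fun a b => mul b a) one.
    split; [move=> a b c /=; by rewrite A | split => a /=; [exact: R1 | exact: L1]].
  exact: (sepL Hmon' (s := sR) HsR HR).
case: (Hreg x) => x' Ex.
pose e := mul x x'.
have He : mul e e = e by rewrite /e A Ex.
have Hx : Re mul e x by exists x, x'; rewrite /e Ex.
have Hy : Re mul e y.
  case: HR => a [b [Ea Eb]]; exists y, (mul a x'); split.
  - by rewrite /e {2}Eb A Ex -Eb.
  - by rewrite /e A -Ea.
pose LX := Lix Hmon HsL. pose R0 := r0 Hmon HsL e.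
case: (classic (LX (mul R0 x) = LX (mul R0 y))) => EL.
- have nh := hc_ne He Hx Hy nxy EL.
  case: (hc_spec Hmon HsL He (Re_r0 Hmon HsL He Hx)) => Hhx _.
  case: (hc_spec Hmon HsL He (Re_r0 Hmon HsL He Hy)) => Hhy _.
  case: (RFH e He _ _ Hhx Hhy nh) => G [phi [phiM ne]].
  exact: (sepS He phiM Hx Hy (or_intror ne)).
- exact: (@sepS _ _ _ Hmon _ HsL e He _ (fun _ => (1 : {perm bool})%g) x y
           (fun _ _ _ _ => esym (mulg1 _)) Hx Hy (or_introl EL)).
Qed.
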